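(* Let $F$, $G$, $\Pi$ be as in the context. For $(\xi,z)\in\Sigma_N\times I$ and $(\omega,x)\in\Sigma_A\times I$ let $\nu_n(\xi,z)=\frac1n\sum_{i=0}^{n-1}\delta_{F^i(\xi,z)}$ and $\mu_n(\omega,x)=\frac1n\sum_{i=0}^{n-1}\delta_{G^i(\omega,x)}$. If $\nu_n(\Pi(\omega,x))\to\nu$ in the weak$*$ topology as $n\to\infty$ and $\mu$ is a weak$*$ limit point of the sequence $(\mu_n(\omega,x))_n$, then $\nu=\Pi_*\mu$.
   Context: $I=[0,1]$, $R(x)=1-x$. $F(\xi,p)=(\sigma(\xi),f_{\xi_0}(p))$ on $\Sigma_N\times I$, $\Sigma_N=\{1,\ldots,N\}^{\mathbb Z}$, with $f_i$ $C^1$-diffeomorphisms onto their images. $\mathcal I_P$ / $\mathcal I_R$: indices of orientation preserving / reversing $f_i$. $A=(a_{ij})_{i,j=1}^{2N}$ with $a_{ij}=1$ if ($i\in\mathcal I_P$, $j\le N$), or ($i\in\mathcal I_R$, $j>N$), or ($i-N\in\mathcal I_P$, $j>N$), or ($i-N\in\mathcal I_R$, $j\le N$), else $0$; $\Sigma_A$ the $A$-admissible sequences in $\{1,\ldots,2N\}^{\mathbb Z}$ with shift $\sigma_A$; $\pi(\omega)_n=\overline{\omega_n}$ ($\overline i=i$ for $i\le N$, $\overline i=i-N$ otherwise). $G(\omega,x)=(\sigma_A(\omega),g_{\omega_0}(x))$ with $g_i=f_i$, $g_{i+N}=R\circ f_i\circ R$ ($i\in\mathcal I_P$), $g_i=R\circ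 f_i$, $g_{i+N}=f_i\circ R$ ($i\in\mathcal I_R$). $C=\{\omega\colon\omega_0\le N\}$; $\Pi(\omega,x)=(\pi(\omega),x)$ if $\omega\in C$, $(\pi(\omega),R(x))$ otherwise. *)

(* Defs.v *)
From HB Require Import structures.
From mathcomp Require Import all_boot all_order all_algebra.
From mathcomp Require Import all_classical all_reals all_analysis.
Set Implicit Arguments. Unset Strict Implicit. Unset Printing Implicit Defensive.
Import Order.TTheory GRing.Theory Num.Theory.
Import numFieldNormedType.Exports.
Local Open Scope classical_set_scope.
Local Open Scope ring_scope.

Definition Icc (R : realType) : Type := set_type (`[0, 1]%classic : set R).
HB.instance Definition _ (R : realType) := Topological.on (Icc R).

Lemma Icc0P (R : realType) : (0 : R) \in (`[0, 1]%classic : set R).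
Proof. by apply/mem_set; rewrite /= in_itv /= lexx ler01. Qed.
HB.instance Definition _ (R : realType) :=
  isPointed.Build (Icc R) (exist _ 0 (Icc0P R)).


Definition Sym (n : nat) : Type := discrete_topology 'I_n.+1.
HB.instance Definition _ n := Choice.on (Sym n).
HB.instance Definition _ n := isPointed.Build (Sym n) (ord0 : 'I_n.+1).
HB.instance Definition _ n := Topological.on (Sym n).

Definition SigmaN (n : nat) : Type := {ptws int -> Sym n}.
HB.instance Definition _ n := Topological.on (SigmaN n).
HB.instance Definition _ n := Pointed.on (SigmaN n).

Definition shiftN n (xi : SigmaN n) : SigmaN n := fun k => xi (k + 1).

(* ---------- the alphabet {1,...,2N} of Sigma_A, encoded as 'I_(N+N) *)
Definition Sym2 (n : nat) : Type := discrete_topology 'I_(n.+1 + n.+1).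
HB.instance Definition _ n := Choice.on (Sym2 n).
HB.instance Definition _ n := isPointed.Build (Sym2 n) (lshift n.+1 (ord0 : 'I_n.+1)).
HB.instance Definition _ n := Topological.on (Sym2 n).

(* "s <= N" in the paper (first copy of the alphabet) *)
Definition first n (s : 'I_(n.+1 + n.+1)) : bool := (s < n.+1)%N.
(* the bar map: bar i = i for i <= N, bar i = i - N otherwise *)
Definition bar n (s : 'I_(n.+1 + n.+1)) : 'I_n.+1 :=
  match fintype.split s with inl i => i | inr i => i end.

(* the transition matrix A; P i <-> i \in I_P (orientation preserving) *)
Definition adm n (P : 'I_n.+1 -> bool) (s t : 'I_(n.+1 + n.+1)) : bool :=
  if first s then (if P (bar s) then first t else ~~ first t)
  else (if P (bar s) then ~~ first t else first t).

Definition FullA (n : nat) : Type := {ptws int -> Sym2 n}.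
HB.instance Definition _ n := Topological.on (FullA n).
HB.instance Definition _ n := Pointed.on (FullA n).

Definition admissible n (P : 'I_n.+1 -> bool) : set (FullA n) :=
  [set w | forall k : int, adm P (w k) (w (k + 1))].

Definition SigmaA n (P : 'I_n.+1 -> bool) : Type := set_type (admissible P).
Arguments SigmaA : clear implicits.
HB.instance Definition _ n P := Topological.on (SigmaA n P).

Lemma odd_absz_add1 (k : int) : odd (absz (k + 1)) = ~~ odd (absz k).
Proof.
case: k => m.
  by rewrite -[Posz m + 1]/(Posz (m + 1)%N) /= addn1.
rewrite NegzE.
have -> : (- Posz m.+1 + 1 = - Posz m)%R.
  by rewrite -addn1 PoszD opprD addrK.
by rewrite !abszN /= negbK.
Qed.

Definition pointA n (P : 'I_n.+1 -> bool) : FullA n :=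
  fun k => if P ord0 then lshift n.+1 (ord0 : 'I_n.+1)
           else if odd (absz k) then rshift n.+1 (ord0 : 'I_n.+1)
           else lshift n.+1 (ord0 : 'I_n.+1).

Lemma bar_lshift n (i : 'I_n.+1) : bar (lshift n.+1 i) = i.
Proof. by rewrite /bar; case: fintype.splitP => j /= Hj; apply: val_inj => //=;
  move: (ltn_ord i); rewrite Hj ltnNge leq_addr. Qed.

Lemma bar_rshift n (i : 'I_n.+1) : bar (rshift n.+1 i) = i.
Proof.
rewrite /bar; case: fintype.splitP => j /= Hj; apply: val_inj => //=.
  by move: (ltn_ord j); rewrite -Hj ltnNge leq_addr.
by move/eqP: Hj; rewrite eqn_add2l => /eqP.
Qed.

Lemma pointA_adm n P : admissible P (@pointA n P).
Proof.
move=> k; rewrite /pointA /adm.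
case HP: (P ord0); first by rewrite bar_lshift HP /first /=.
rewrite odd_absz_add1.
case: (odd (absz k)) => /=.
  by rewrite bar_rshift HP /first /= ltnNge leq_addr.
by rewrite bar_lshift HP /first /= ltnNge leq_addr.
Qed.

HB.instance Definition _ n P :=
  isPointed.Build (SigmaA n P) (exist _ (@pointA n P) (mem_set (@pointA_adm n P))).

Lemma shiftA_adm n P (w : SigmaA n P) :
  admissible P (fun k => (val w) (k + 1) : Sym2 n).
Proof. by move=> k; have := set_mem (valP w) (k + 1). Qed.

Definition shiftA n P (w : SigmaA n P) : SigmaA n P :=
  exist _ (fun k => (val w) (k + 1) : Sym2 n) (mem_set (shiftA_adm w)).

Lemma refl_in (R : realType) (x : Icc R) :
  (1 - val x) \in (`[0, 1]%classic : set R).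
Proof.
have := set_mem (valP x); rewrite /= in_itv /= => /andP[h0 h1].
by apply/mem_set; rewrite /= in_itv /= subr_ge0 h1 lerBlDr lerDl h0.
Qed.

Definition Refl (R : realType) (x : Icc R) : Icc R := exist _ (1 - val x) (refl_in x).

(* f is a C^1 diffeomorphism of I onto its image: injective, with a continuous
   nowhere vanishing derivative (one-sided at the endpoints, i.e. derivative
   within I). *)
Definition C1_diffeo_onto_image (R : realType) (h : Icc R -> Icc R) : Prop :=
  injective h /\
  exists dh : Icc R -> R, continuous dh /\ (forall x, dh x != 0) /\
    forall x : Icc R,
      (fun y : Icc R => (val (h y) - val (h x)) / (val y - val x))
        @ within (fun y => y != x) (nbhs x) --> dh x.

Definition orientation_preserving (R : realType) (h : Icc R -> Icc R) : Prop :=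
  forall x y : Icc R, val x < val y -> val (h x) < val (h y).
Definition orientation_reversing (R : realType) (h : Icc R -> Icc R) : Prop :=
  forall x y : Icc R, val x < val y -> val (h y) < val (h x).

Definition XN n (R : realType) : Type := (SigmaN n * Icc R)%type.
HB.instance Definition _ n R := Topological.on (XN n R).
HB.instance Definition _ n R := Pointed.on (XN n R).

Definition XA n (P : 'I_n.+1 -> bool) (R : realType) : Type :=
  (SigmaA n P * Icc R)%type.
Arguments XA : clear implicits.
HB.instance Definition _ n P R := Topological.on (XA n P R).
HB.instance Definition _ n P R := Pointed.on (XA n P R).

Definition skewF n R (f : 'I_n.+1 -> Icc R -> Icc R) (p : XN n R) : XN n R :=
  (shiftN p.1, f (p.1 0) p.2).

(* g_i = f_i, g_{i+N} = R o f_i o R (i in I_P);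
   g_i = R o f_i, g_{i+N} = f_i o R (i in I_R) *)
Definition gmap n R (P : 'I_n.+1 -> bool) (f : 'I_n.+1 -> Icc R -> Icc R)
    (s : 'I_(n.+1 + n.+1)) : Icc R -> Icc R :=
  let i := bar s in
  if first s then (if P i then f i else fun x => Refl (f i x))
  else (if P i then fun x => Refl (f i (Refl x)) else fun x => f i (Refl x)).

Definition skewG n R P (f : 'I_n.+1 -> Icc R -> Icc R) (p : XA n P R) : XA n P R :=
  (shiftA p.1, gmap P f (val p.1 0) p.2).

Definition piA n P (w : SigmaA n P) : SigmaN n := fun k => bar (val w k).

Definition Pi n R P (p : XA n P R) : XN n R :=
  (piA p.1, if first (val p.1 0) then p.2 else Refl p.2).

Definition Borel (T : ptopologicalType) := g_sigma_algebraType (@open T).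

Definition empirical (R : realType) (T : ptopologicalType) (h : T -> T) (x : T)
    (n : nat) : {measure set (Borel T) -> \bar R} :=
  mscale (n%:R^-1)%:nng (msum (fun i => @dirac _ (Borel T) (iter i h x) R) n).

Definition weak_star_cvg (R : realType) (T : ptopologicalType)
    (mu_ : nat -> {measure set (Borel T) -> \bar R})
    (mu : {measure set (Borel T) -> \bar R}) : Prop :=
  forall phi : T -> R, continuous phi ->
    (fun n => (\int[mu_ n]_x (phi x)%:E)%E) @ \oo
      --> (\int[mu]_x (phi x)%:E)%E.

Definition weak_star_limit_point (R : realType) (T : ptopologicalType)
    (mu_ : nat -> {measure set (Borel T) -> \bar R})
    (mu : {measure set (Borel T) -> \bar R}) : Prop :=
  exists s : nat -> nat, {homo s : m k / (m < k)%N} /\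
    weak_star_cvg (fun k => mu_ (s k)) mu.

(* Main.v *)
Require Import Defs.
From HB Require Import structures.
From mathcomp Require Import all_boot all_order all_algebra.
From mathcomp Require Import all_classical all_reals all_analysis.
From mathcomp Require Import measurable_realfun.
Import Order.TTheory GRing.Theory Num.Theory.
Import numFieldNormedType.Exports.
Local Open Scope classical_set_scope.
Local Open Scope ring_scope.
Set Implicit Arguments. Unset Strict Implicit. Unset Printing Implicit Defensive.

Lemma cont_measR (T : ptopologicalType) (R : realType) (phi : T -> R) :
  continuous phi -> measurable_fun [set: Borel T] (phi : Borel T -> R).
Proof.
move=> cphi; apply: (measurability _ (measurable_realfun.RGenOpens.measurableE R)).
move=> _ [_ [x [y ->]] <-]; rewrite setTI.
apply: sub_sigma_algebra.
by move/continuousP : cphi; apply; exact: interval_open.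
Qed.

Lemma cont_measE (T : ptopologicalType) (R : realType) (phi : T -> R) :
  continuous phi -> measurable_fun [set: Borel T] (fun x : Borel T => (phi x)%:E).
Proof. by move=> cphi; apply: measurableT_comp => //; exact: cont_measR. Qed.

Definition approx_open (R : realType) (T : ptopologicalType) :=
  forall U : set T, open U -> exists f_ : nat -> T -> R,
    [/\ forall k, continuous (f_ k), forall k x, 0 <= f_ k x,
        forall x, {homo f_ ^~ x : a b / (a <= b)%N >-> a <= b} &
        forall x, f_ ^~ x @ \oo --> (\1_U x : R)].

Lemma meas_eq_cont (R : realType) (T : ptopologicalType) (m1 m2 : measure (Borel T) R) :
  approx_open R T -> (m1 setT < +oo)%E ->
  (forall phi : T -> R, continuous phi -> (forall x, 0 <= phi x) ->
     (\int[m1]_x (phi x)%:E = \int[m2]_x (phi x)%:E)%E) ->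
  forall A, measurable A -> m1 A = m2 A.
Proof.
move=> hap m1T hint A mA.
apply: (@measure_unique _ R (Borel T) (@open T) (fun=> setT) erefl) => //.
- exact: openI.
- move=> k; exact: openT.
- by apply/seteqP; split => // x _; exists 0%N.
move=> U oU.
have [f_ [cf f0 fnd fcv]] := hap U oU.
have mU : measurable (U : set (Borel T)) by exact: sub_sigma_algebra.
have key (m : measure (Borel T) R) :
    ((fun k => \int[m]_x (f_ k x)%:E) @ \oo --> m U)%E.
  have := @cvg_monotone_convergence _ (Borel T) R m setT measurableT
    (fun k x => (f_ k x)%:E) (fun k => cont_measE (cf k)) _ _.
  have -> : (fun x : Borel T => limn (fun k => (f_ k x)%:E)) = (fun x => (\1_U x)%:E).
    apply/funext => x; apply: cvg_lim => //.
    by apply: cvg_EFin; [exact: nearW | exact: fcv].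
  rewrite integral_indic // setIT; apply.
    by move=> k x _; rewrite lee_fin.
  by move=> x _ a b ab; rewrite lee_fin; exact: fnd.
have e : (fun k => \int[m1]_x (f_ k x)%:E)%E = (fun k => \int[m2]_x (f_ k x)%:E)%E.
  by apply/funext => k; apply: hint.
have := key m1; rewrite e => h1.
exact: (cvg_unique _ h1 (key m2)).
Qed.
Lemma approx_pm (R : realType) (T : pseudoMetricType R) (U : set T) :
  open U -> exists f_ : nat -> T -> R,
    [/\ forall k, continuous (f_ k), forall k x, 0 <= f_ k x,
        forall x, {homo f_ ^~ x : a b / (a <= b)%N >-> a <= b} &
        forall x, f_ ^~ x @ \oo --> (\1_U x : R)].
Proof.
move=> oU.
have rpos (j : nat) : 0 < (j.+1%:R : R)^-1 by rewrite invr_gt0 ltr0Sn.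
pose r (j : nat) : {posnum R} := PosNum (rpos j).
pose B j := [set x | ball x (r j)%:num `<=` U].
pose u j := Urysohn (R := R) (~` U) (B j).
have sep j : uniform_separator (~` U) (B j).
  apply: uniform_separatorW; exists [set pq | ball pq.1 (r j)%:num pq.2].
    exact: entourage_ball.
  apply/seteqP; split=> // [[a b]] [[/= nUa Bb] hab]; apply: nUa; apply: Bb.
  exact: ball_sym.
have u0 j x : ~ U x -> u j x = 0.
  by move=> nUx; apply: (Urysohn_sub0 (sep j)); exists x.
have u1 j x : B j x -> u j x = 1.
  by move=> Bx; apply: (Urysohn_sub1 (sep j)); exists x.
have ur j x : 0 <= u j x <= 1.
  have : (`[0, 1]%classic : set R) (u j x) by apply: Urysohn_range; exists x.
  by rewrite /= in_itv.
pose f_ := fix g (k : nat) (x : T) : R := if k is k'.+1 then Num.max (g k' x) (u k' x) else 0.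
have fS k x : f_ k.+1 x = Num.max (f_ k x) (u k x) by [].
have hmono x : {homo f_ ^~ x : a b / (a <= b)%N >-> a <= b}.
  apply: homo_leq => //; first by move=> ? ? ?; exact: le_trans.
  by move=> k; rewrite fS le_max lexx.
exists f_; split.
- elim=> [|k IH] x; first exact: cvg_cst.
  exact: (continuous_max (IH x) (@Urysohn_continuous _ _ _ _ x)).
- by elim=> [|k IH] x //; rewrite fS le_max IH.
- exact: hmono.
move=> x; have [Ux|nUx] := pselect (U x); last first.
  have f0 k : f_ k x = 0 by elim: k => // k IH; rewrite fS IH (u0 _ _ nUx) maxxx.
  rewrite indicE memNset //; apply: cvg_near_cst; exact: nearW.
rewrite indicE mem_set //.
have : nbhs x U by exact: open_nbhs_nbhs.
case/nbhs_ballP => e e0 be.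
have [N _ HN] := near_infty_natSinv_lt (PosNum e0).
have BN : B N x.
  move=> y bxy; apply: be; apply: le_ball bxy; apply/ltW; exact: (HN N (leqnn N)).
apply: cvg_near_cst; exists N.+1 => // k /= Nk.
apply/eqP; rewrite eq_le; apply/andP; split.
  by elim: {Nk} k => [|k IH]; rewrite ?ler01 // fS ge_max IH; case/andP: (ur k x).
rewrite -(u1 N x BN).
apply: le_trans (hmono x _ _ Nk); by rewrite fS le_max lexx orbT.
Qed.

Lemma approx_XN (R : realType) n : approx_open R (XN n R).
Proof.
move=> U oU.
exact: (@approx_pm R ({ptws int -> discrete_topology 'I_n.+1} * Icc R)%type U oU).
Qed.
Lemma cont_measT (T U : ptopologicalType) (f : T -> U) :
  continuous f -> measurable_fun [set: Borel T] (f : Borel T -> Borel U).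
Proof.
move=> cf; apply: (@measurability _ _ (Borel T) (Borel U) setT f _ (erefl _)).
move=> _ [B oB <-]; rewrite setTI.
by apply: sub_sigma_algebra; move/continuousP : cf; apply.
Qed.

Lemma empirical_int (R : realType) (T : ptopologicalType) (h : T -> T) (x : T)
  (k : nat) (g : Borel T -> \bar R) :
  measurable_fun [set: Borel T] g -> (forall y, (0 <= g y)%E) ->
  (\int[empirical R h x k]_y g y = (k%:R^-1)%:E * \sum_(i < k) g (iter i h x))%E.
Proof.
move=> mg g0.
rewrite ge0_integral_mscale //= ge0_integral_measure_sum //; congr (_ * _)%E.
apply: eq_bigr => i _; rewrite integral_dirac // diracT mul1e //.
Qed.
Lemma ReflK (R : realType) (x : Icc R) : Refl (Refl x) = x.
Proof. by apply: val_inj => /=; rewrite subKr. Qed.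

Lemma semiconj (R : realType) n (P : 'I_n.+1 -> bool) (f : 'I_n.+1 -> Icc R -> Icc R)
  (p : XA n P R) : Pi (skewG f p) = skewF f (Pi p).
Proof.
case: p => w x; rewrite /Pi /skewG /skewF /=; congr pair.
have := set_mem (valP w) 0; rewrite /adm /gmap /piA /=.
rewrite add0r.
case: (first (val w 0)); case: (P (bar (val w 0))); case: (first (val w 1)) => //= _;
  by rewrite ?ReflK.
Qed.

Lemma semiconj_iter (R : realType) n (P : 'I_n.+1 -> bool) (f : 'I_n.+1 -> Icc R -> Icc R)
  (p : XA n P R) i : Pi (iter i (skewG f) p) = iter i (skewF f) (Pi p).
Proof. by elim: i => //= i IH; rewrite semiconj IH. Qed.
Lemma ptws_continuous (X : topologicalType) (I : Type) (K : topologicalType)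
  (g : X -> {ptws I -> K}) : (forall i, continuous (fun x => g x i)) -> continuous g.
Proof.
move=> cg x; apply/cvg_sup => i U.
have /= -> := @nbhsE (initial_topology (fun f : {ptws I -> K} => f i)) (g x).
case=> B [[C oC <-] Cx] /filterS; apply.
by apply: (cg i x); apply: open_nbhs_nbhs.
Qed.

Lemma discrete_dom_continuous (T : choiceType) (Y : topologicalType)
  (f : discrete_topology T -> Y) : continuous f.
Proof.
move=> x U Ux; rewrite /= nbhs_simpl.
apply: (filterS _ (discrete_set1 x)) => y ->.
by move: Ux => /nbhs_singleton.
Qed.

Lemma val_continuous (R : realType) : continuous (fun x : Icc R => val x).
Proof. exact: (@initial_continuous _ _ set_val). Qed.
Lemma Refl_continuous (R : realType) : continuous (@Refl R).
Proof.
have := (@continuous_comp_initial (Icc R) (Icc R) R (@set_val R `[0,1]) (@Refl R)).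
apply.
have -> : set_val \o @Refl R = (fun y : Icc R => 1 - val y) by [].
move=> x; apply: (@cvgB _ _ _ (nbhs x)).
  exact: cvg_cst.
exact: val_continuous.
Qed.

Lemma fst_cont (R : realType) n P : continuous (fun q : XA n P R => q.1).
Proof. move=> q; exact: cvg_fst. Qed.
Lemma snd_cont (R : realType) n P : continuous (fun q : XA n P R => q.2).
Proof. move=> q; exact: cvg_snd. Qed.
Lemma sval_cont n P : continuous (fun w : SigmaA n P => (val w : FullA n)).
Proof. exact: (@initial_continuous _ _ set_val). Qed.
Lemma cval (R : realType) n P : continuous (fun q : XA n P R => (val q.1 : FullA n)).
Proof. move=> q; apply: continuous_comp; [exact: fst_cont| exact: sval_cont]. Qed.
Lemma ccoord (R : realType) n P k : continuous (fun q : XA n P R => (val q.1 k : Sym2 n)).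
Proof. move=> q; have := (continuous_comp (@cval R n P q) (@proj_continuous int (fun=> Sym2 n) k (val q.1))). exact. Qed.
Lemma Pi_continuous (R : realType) n (P : 'I_n.+1 -> bool) :
  continuous (@Pi n R P : XA n P R -> XN n R).
Proof.
move=> q; rewrite /Pi.
apply: (@cvg_pair _ _ _ (nbhs q) (nbhs (piA q.1 : SigmaN n)) (nbhs (if first (val q.1 0) then q.2 else Refl q.2)) _ _ _ (fun q => piA q.1) (fun q : XA n P R => if first (val q.1 0) then q.2 else Refl q.2)).
- apply: (ptws_continuous (g := fun q : XA n P R => piA q.1)) => k q'.
  have := (continuous_comp (@ccoord R n P k q') (@discrete_dom_continuous _ (Sym n) (@bar n : Sym2 n -> Sym n) _)); exact.
- have h0 : \forall q' \near q, val q'.1 0 = val q.1 0.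
    have := @ccoord R n P 0 q [set val q.1 0] (@discrete_set1 (discrete_topology 'I_(n.+1+n.+1)) (val q.1 0)); exact.
  pose g0 := fun q' : XA n P R => if first (val q.1 0) then q'.2 else Refl q'.2.
  have hne : {near q, g0 =1 (fun q' : XA n P R => if first (val q'.1 0) then q'.2 else Refl q'.2)}.
    by near=> q'; rewrite /g0 (near h0 q').
  apply: cvg_trans; first exact: (near_eq_cvg hne).
  rewrite /g0.
  case: (first _).
    exact: cvg_snd.
  have := (continuous_comp (@snd_cont R n P q) (@Refl_continuous R _)); exact.
Unshelve. all: by end_near.
Qed.

Lemma subseq_cvg (s : nat -> nat) : {homo s : m k / (m < k)%N} -> s @ \oo --> \oo.
Proof.
move=> hs; have hk k : (k <= s k)%N.
  elim: k => // k IH; apply: leq_ltn_trans IH _; exact: hs.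
move=> P [N _ HP]; exists N => // k Nk; apply: HP; exact: leq_trans Nk (hk k).
Qed.

Theorem lemma3p28 (R : realType) (n : nat)
    (f : 'I_n.+1 -> Icc R -> Icc R) (P : 'I_n.+1 -> bool)
    (hf : forall i, C1_diffeo_onto_image (f i))
    (hP : forall i, P i -> orientation_preserving (f i))
    (hR : forall i, ~~ P i -> orientation_reversing (f i))
    (w : SigmaA n P) (x : Icc R)
    (nu : probability (Borel (XN n R)) R)
    (mu : probability (Borel (XA n P R)) R) :
  weak_star_cvg (empirical R (@skewF n R f) (@Pi n R P (w, x))) nu ->
  weak_star_limit_point (empirical R (@skewG n R P f) ((w, x) : XA n P R)) mu ->
  forall A : set (Borel (XN n R)), measurable A ->
    nu A = pushforward mu (@Pi n R P : Borel (XA n P R) -> Borel (XN n R)) A.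
Proof.
move=> hnu [s [hs hmu]] A mA.
have cPi := @Pi_continuous R n P.
have mPi : measurable_fun [set: Borel (XA n P R)]
    (@Pi n R P : Borel (XA n P R) -> Borel (XN n R)) := cont_measT cPi.
pose m2 := measure_function_pushforward__canonical__measure_function_Measure mu mPi.
change (nu A = m2 A).
apply: (@meas_eq_cont _ (XN n R) nu m2 (@approx_XN R n)) => //.
  have h1 := @probability_setT _ _ _ nu.
  by move: h1 => /= ->; exact: ltey.
move=> phi cphi phi0.
have cphiPi : continuous (phi \o @Pi n R P).
  by move=> q; apply: continuous_comp; [exact: cPi | exact: cphi].
rewrite /m2 /= ge0_integral_pushforward //; last 2 first.
- exact: cont_measE.
- by move=> y _; rewrite lee_fin; exact: phi0.
rewrite preimage_setT.
pose a k := (\int[empirical R (@skewF n R f) (@Pi n R P (w, x)) k]_y (phi y)%:E)%E.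
have ha := hnu phi cphi.
have hb := hmu _ cphiPi.
have eqab k : a k = (\int[empirical R (@skewG n R P f) ((w, x) : XA n P R) k]_y
     ((phi \o @Pi n R P) y)%:E)%E.
  rewrite /a empirical_int; last 2 first.
  - exact: (cont_measE cphi).
  - by move=> y; rewrite lee_fin; exact: phi0.
  rewrite empirical_int; last 2 first.
  - exact: (cont_measE cphiPi).
  - by move=> y; rewrite lee_fin; exact: phi0.
  congr (_ * _)%E; apply: eq_bigr => i _.
  by rewrite /= semiconj_iter.
have ha' := cvg_comp _ _ (subseq_cvg hs) ha.
have e : (a \o s) = (fun k => \int[empirical R (@skewG n R P f) ((w, x) : XA n P R) (s k)]_y
     ((phi \o @Pi n R P) y)%:E)%E.
  by apply/funext => k; rewrite /= eqab.
rewrite e in ha'.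
exact: (cvg_unique _ ha' hb).
Qed.
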